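(* Let $h\in\mathbb{N}$, $h'\in[h+1]$, $\ell\in\mathbb{N}$ and let $G$ be a graph. Let $T=t_1\dots t_{(h+1)\ell+h'-1}$ be the $h$-th power of a path in $G$ (each vertex adjacent to the preceding $h$ vertices), and let $W$ be a set of vertices disjoint from $T$. Let $Q_1:=\{t_1,\dots,t_{h+1}\}$, $Q_i:=\{t_{(h+1)(i-2)+1},\dots,t_{(h+1)i}\}$ for $1<i\leq\ell$, and $Q_{\ell+1}:=\{t_{(h+1)\ell-h},\dots,t_{(h+1)\ell+h'-1}\}$. If there is a permutation $\sigma$ of $[\ell+1]$ such that for each $i\in[\ell+1]$ the vertices of $Q_{\sigma(i)}$ have at least $i$ common neighbours in $W$, then there are distinct $q_1,\dots,q_{\ell+1}\in W$ such that $(q_1t_1\dots t_{h+1})(q_2t_{h+2}\dots t_{2(h+1)})\dots(q_\ell t_{(h+1)\ell-h}\dots t_{(h+1)\ell})(q_{\ell+1}t_{(h+1)\ell+1}\dots t_{(h+1)\ell+h'-1})$ is (in this order) the $(h+1)$-th power of a path in $G$, using every vertex of $T$. If instead $T=t_1\dots t_{(h+1)\ell}$ is the $h$-th power of a cycle in $G$ and we set $Q_1:=\{t_{(h+1)\ell-h},\dots,t_{(h+1)\ell},t_1,\dots,t_{h+1}\}$, $Q_i:=\{t_{(h+1)(i-2)+1},\dots,t_{(h+1)i}\}$ for $1<i\leq\ell$, and there is a permutation $\sigma$ of $[\ell]$ such that for each $i\in[\ell]$ the vertices of $Q_{\sigma(i)}$ have at least $i$ common neighbours in $W$, then $G$ contains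 the $(h+1)$-th power of a cycle $C^{h+1}_{(h+2)\ell}$ (obtained by inserting distinct vertices $q_1,\dots,q_\ell\in W$ before each block $t_{(h+1)(i-1)+1}\dots t_{(h+1)i}$).
   Context: The $h$-th power of a path (cycle) $v_1\dots v_s$ is the graph on these vertices in which $v_i,v_j$ are adjacent whenever their distance along the path (cycle) is at most $h$. $C^{h+1}_{s}$ denotes the $(h+1)$-th power of a cycle on $s$ vertices. *)

(* Defs.v *)
From mathcomp Require Import all_boot all_fingroup.
Set Implicit Arguments. Unset Strict Implicit. Unset Printing Implicit Defensive.

Section Defs.
Variable V : finType.
Variable e : rel V.

Definition is_path_power (h : nat) (s : seq V) : Prop :=
  uniq s /\
  forall (x0 : V) (i j : nat), i < j -> j < size s -> j - i <= h ->
    e (nth x0 s i) (nth x0 s j).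

Definition is_cycle_power (h : nat) (s : seq V) : Prop :=
  uniq s /\
  forall (x0 : V) (i j : nat), i < j -> j < size s ->
    (j - i <= h) || (size s - (j - i) <= h) ->
    e (nth x0 s i) (nth x0 s j).

(* the segment t_lo ... t_hi (1-indexed), truncated to existing indices *)
Definition seg (t : seq V) (lo hi : nat) : seq V := drop lo.-1 (take hi t).

Definition Qpath (h h' l : nat) (t : seq V) (i : nat) : seq V :=
  if i == l.+1 then seg t ((h + 1) * l - h) ((h + 1) * l + h' - 1)
  else if i == 1 then seg t 1 (h + 1)
  else seg t ((h + 1) * (i - 2) + 1) ((h + 1) * i).

Definition Qcycle (h l : nat) (t : seq V) (i : nat) : seq V :=
  if i == 1 then seg t ((h + 1) * l - h) ((h + 1) * l) ++ seg t 1 (h + 1)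
  else seg t ((h + 1) * (i - 2) + 1) ((h + 1) * i).

Definition common_nbrs (W : {set V}) (Q : seq V) : {set V} :=
  [set w in W | all (fun x => e x w) Q].

(* q_1 t_1 .. t_{h+1} q_2 t_{h+2} .. t_{2(h+1)} ... q_k t_{(h+1)(k-1)+1} ...
   (the i-th block is t_{(h+1)(i-1)+1} .. t_{(h+1)i}, truncated to t) *)
Definition insert_vertices (h : nat) (q t : seq V) : seq V :=
  flatten [seq x.1 :: x.2 | x <- zip q
    [seq take (h + 1) (drop ((h + 1) * i) t) | i <- iota 0 (size q)]].

End Defs.

(* Main.v *)
From mathcomp Require Import zify.
Require Import Defs.
From mathcomp Require Import all_boot all_fingroup.
Set Implicit Arguments. Unset Strict Implicit. Unset Printing Implicit Defensive.

Section Aux.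
Variable V : finType.

Lemma ins_cons h (x : V) q t :
  insert_vertices h (x :: q) t = x :: take (h + 1) t ++ insert_vertices h q (drop (h + 1) t).
Proof.
rewrite /insert_vertices /= muln0 drop0.
rewrite -[in iota 1 _](addn0 1) iotaDl -map_comp.
do 4 f_equal; apply: (congr1 (zip q)); apply: eq_map => i /=.
by rewrite drop_drop; congr (take _ (drop _ t)); lia.
Qed.

Lemma perm_ins h (q t : seq V) :
  (h + 1) * (size q).-1 <= size t <= (h + 1) * size q ->
  perm_eq (insert_vertices h q t) (q ++ t).
Proof.
elim: q t => [|x q IH] t /= Hs.
  by case: t Hs => //= y t; lia.
rewrite ins_cons perm_cons.
have H1 := IH (drop (h + 1) t).
apply: (perm_trans (_ : perm_eq _ (take (h+1) t ++ (q ++ drop (h+1) t)))).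
  rewrite perm_cat2l; apply: H1. rewrite size_drop. case: q {IH} Hs => [|y q] /= Hs; lia.
by rewrite perm_catCA cat_take_drop.
Qed.

Lemma nth_ins h (q t : seq V) x0 a b :
  (h + 1) * (size q).-1 <= size t <= (h + 1) * size q ->
  b < h + 2 -> (h + 2) * a + b < size q + size t ->
  nth x0 (insert_vertices h q t) ((h + 2) * a + b) =
  if b == 0 then nth x0 q a else nth x0 t ((h + 1) * a + b.-1).
Proof.
elim: q t a b => [|x q IH] t a b /= Hs Hb Hp; first lia.
rewrite ins_cons. case: a Hp => [|a] Hp.
  rewrite muln0 add0n. case: b Hb Hp => [|b] Hb Hp //=.
  rewrite nth_cat size_take.
  have Hbt : b < size t by case: q {IH} Hs Hp => [|y q] /= Hs Hp; lia.
  have -> : b < (if h + 1 < size t then h + 1 else size t) by case: ifP; lia.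
  by rewrite nth_take ?muln0 //; lia.
have -> : (h + 2) * a.+1 + b = ((h + 1) + ((h + 2) * a + b)).+1 by lia.
rewrite /= nth_cat size_take.
have Ht : h + 1 <= size t by case: q {IH} Hs Hp => [|y q] /= Hs Hp; lia.
have -> : (if h + 1 < size t then h + 1 else size t) = h + 1 by case: ifP; lia.
rewrite ltnNge leq_addr /= addKn IH //; last first.
  by rewrite size_drop; lia.
  by rewrite size_drop; case: q {IH} Hs Hp => [|y q] /= Hs Hp; lia.
case: (b == 0) => //. by rewrite nth_drop; congr nth; lia.
Qed.


Lemma greedy (L : seq {set V}) :
  (forall i, i < size L -> i < #|nth set0 L i|) ->
  exists r : seq V, [/\ size r = size L, uniq r &
    forall x0 i, i < size L -> nth x0 r i \in nth set0 L i].
Proof.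
elim/last_ind: L => [|L A IH] H; first by exists [::].
have [r [Hr1 Hr2 Hr3]] : exists r : seq V, [/\ size r = size L, uniq r &
    forall x0 i, i < size L -> nth x0 r i \in nth set0 L i].
  apply: IH => i Hi. have := H i. rewrite size_rcons nth_rcons Hi. by apply; lia.
have HA : size L < #|A|.
  have := H (size L). rewrite size_rcons nth_rcons ltnn eqxx. by apply.
have [x xA xr] : exists2 x, x \in A & x \notin r.
  apply/subsetPn/negP => sub. have := subset_leq_card sub.
  rewrite (card_uniqP Hr2). lia.
exists (rcons r x); split.
- by rewrite !size_rcons Hr1.
- by rewrite rcons_uniq xr Hr2.
- move=> x0 i; rewrite size_rcons !nth_rcons Hr1 ltnS leq_eqVlt.
  case/orP => [/eqP -> | Hi]; first by rewrite ltnn eqxx.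
  by rewrite Hi Hr3.
Qed.

Lemma choose_perm n (A : nat -> {set V}) (s : 'S_n) (x0 : V) :
  (forall i : 'I_n, i.+1 <= #|A (s i)|) ->
  exists q : seq V, [/\ size q = n, uniq q &
    forall y0 k, k < n -> nth y0 q k \in A k].
Proof.
move=> H.
pose L := [seq A (s i) | i <- enum 'I_n].
have sL : size L = n by rewrite size_map size_enum_ord.
have nL : forall i (Hi : i < n), nth set0 L i = A (s (Ordinal Hi)).
  move=> i Hi. rewrite (nth_map (Ordinal Hi)) ?size_enum_ord //.
  congr (A (s _)). apply: val_inj => /=. by rewrite nth_enum_ord.
have [r [Hr1 Hr2 Hr3]] : exists r : seq V, [/\ size r = size L, uniq r &
    forall x0 i, i < size L -> nth x0 r i \in nth set0 L i].
  apply: greedy => i; rewrite sL => Hi. rewrite nL. exact: H (Ordinal Hi).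
rewrite sL in Hr1 Hr3.
exists [seq nth x0 r ((s^-1)%g k) | k <- enum 'I_n]; split.
- by rewrite size_map size_enum_ord.
- rewrite map_inj_uniq ?enum_uniq // => k1 k2.
  move/eqP; rewrite nth_uniq ?Hr1 // => /eqP /val_inj; exact: perm_inj.
- move=> y0 k Hk. rewrite (set_nth_default x0); last by rewrite size_map size_enum_ord.
  rewrite (nth_map (Ordinal Hk)) ?size_enum_ord //.
  have -> : nth (Ordinal Hk) (enum 'I_n) k = Ordinal Hk.
    apply: val_inj => /=. by rewrite nth_enum_ord.
  have := Hr3 x0 _ (ltn_ord ((s^-1)%g (Ordinal Hk))).
  rewrite nL. have -> : Ordinal (ltn_ord ((s^-1)%g (Ordinal Hk))) = (s^-1)%g (Ordinal Hk).
    by apply: val_inj.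
  by rewrite permKV.
Qed.

Lemma mem_seg (t : seq V) lo hi k x0 :
  lo.-1 <= k -> k < hi -> k < size t -> nth x0 t k \in seg t lo hi.
Proof.
move=> H1 H2 H3. rewrite /seg.
have -> : nth x0 t k = nth x0 (drop lo.-1 (take hi t)) (k - lo.-1).
  by rewrite nth_drop subnKC // nth_take.
apply: mem_nth. rewrite size_drop size_take. case: ifP => _; case: lo H1 => [|lo] /= H1; lia.
Qed.


Lemma core_path (e : rel V) (e_sym : symmetric e) h (q t : seq V) :
  (h + 1) * (size q).-1 <= size t <= (h + 1) * size q ->
  uniq (q ++ t) ->
  (forall x0 i j, i < j -> j < size t -> j - i <= h -> e (nth x0 t i) (nth x0 t j)) ->
  (forall x0 a k, a < size q -> k < size t -> (h + 1) * (a - 1) <= k < (h + 1) * a.+1 ->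
     e (nth x0 q a) (nth x0 t k)) ->
  is_path_power e (h + 1) (insert_vertices h q t).
Proof.
move=> Hs Hu Ht Hq. have Hp := perm_ins Hs.
split; first by rewrite (perm_uniq Hp).
move=> x0 i j Hij; rewrite (perm_size Hp) size_cat => Hj Hd.
have {}Hj : j < size q + size t := Hj.
have Hn : 0 < h + 2 by lia.
have Hb := ltn_pmod i Hn. have Hd' := ltn_pmod j Hn.
rewrite (divn_eq i (h+2)) (divn_eq j (h+2)) in Hij Hj Hd *.
move: (i %/ (h+2)) (i %% (h+2)) (j %/ (h+2)) (j %% (h+2)) Hb Hd' Hij Hj Hd
  => a b c d Hb Hd' Hij Hj Hd.
rewrite ![_ * (h+2)]mulnC in Hij Hj Hd *.
have Hi : (h+2)*a + b < size q + size t by lia.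
rewrite !nth_ins //.
have Hca : c = a \/ c = a.+1 by nia.
case: eqP => Eb; case: eqP => Ed.
- exfalso; case: Hca => ?; subst; nia.
- case: Hca => ?; subst; last by exfalso; nia.
  apply: Hq; nia.
- case: Hca => ?; subst; first by exfalso; nia.
  rewrite e_sym. apply: Hq; nia.
- apply: Ht; case: Hca => ?; subst; nia.
Qed.

Lemma core_cycle (e : rel V) (e_sym : symmetric e) h (q t : seq V) :
  size t = (h + 1) * size q ->
  uniq (q ++ t) ->
  (forall x0 i j, i < j -> j < size t -> (j - i <= h) || (size t - (j - i) <= h) ->
     e (nth x0 t i) (nth x0 t j)) ->
  (forall x0 a k, a < size q -> k < size t ->
     ((h + 1) * (a - 1) <= k < (h + 1) * a.+1) || ((a == 0) && ((h + 1) * (size q - 1) <= k)) ->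
     e (nth x0 q a) (nth x0 t k)) ->
  is_cycle_power e (h + 1) (insert_vertices h q t).
Proof.
move=> Hs0 Hu Ht Hq.
have Hs : (h + 1) * (size q).-1 <= size t <= (h + 1) * size q by rewrite Hs0; nia.
have Hp := perm_ins Hs.
split; first by rewrite (perm_uniq Hp).
move=> x0 i j Hij; rewrite (perm_size Hp) size_cat => Hj Hd.
have {}Hj : j < size q + size t := Hj.
have {}Hd : (j - i <= h + 1) || (size q + size t - (j - i) <= h + 1) := Hd.
have Hn : 0 < h + 2 by lia.
have Hb := ltn_pmod i Hn. have Hd' := ltn_pmod j Hn.
rewrite (divn_eq i (h+2)) (divn_eq j (h+2)) in Hij Hj Hd *.
move: (i %/ (h+2)) (i %% (h+2)) (j %/ (h+2)) (j %% (h+2)) Hb Hd' Hij Hj Hd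
  => a b c d Hb Hd' Hij Hj Hd.
rewrite ![_ * (h+2)]mulnC in Hij Hj Hd *.
have Hi : (h+2)*a + b < size q + size t by lia.
rewrite !nth_ins //.
move: Hs0 Hij Hj Hd Hi Hq Ht. move: (size t) (size q) => m n Hs0 Hij Hj Hd Hi Hq Ht.
subst m.
case/orP: Hd => Hd.
  have Hca : c = a \/ c = a.+1 by nia.
  case: eqP => Eb; case: eqP => Ed.
  - exfalso; case: Hca => ?; subst; nia.
  - case: Hca => ?; subst; last by exfalso; nia.
    apply: Hq; nia.
  - case: Hca => ?; subst; first by exfalso; nia.
    rewrite e_sym. apply: Hq; nia.
  - apply: Ht; case: Hca => ?; subst; nia.
have Ha : a = 0 by nia.
have Hc : n = c.+1 by nia.
subst a n.
case: eqP => Eb; case: eqP => Ed.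
- exfalso; nia.
- apply: Hq; nia.
- exfalso; nia.
- apply: Ht; nia.
Qed.

Lemma subW (W : {set V}) (A : nat -> {set V}) (q : seq V) (x0 : V) n :
    size q = n -> (forall y0 k, k < n -> nth y0 q k \in A k) ->
    (forall k, A k \subset W) -> {subset q <= W}.
Proof.
  move=> Hq1 Hq3 HA x xq.
  rewrite -(nth_index x0 xq). apply: (subsetP (HA (index x q))).
  by apply: Hq3; rewrite -Hq1 index_mem.
Qed.
Lemma AW (e : rel V) W (Q : nat -> seq V) k : common_nbrs e W (Q k) \subset W.
Proof. by apply/subsetP => x; rewrite inE => /andP[]. Qed.
Lemma uqt (W : {set V}) (q t : seq V) : uniq q -> uniq t -> {subset q <= W} ->
    [disjoint W & [pred x | x \in t]] -> uniq (q ++ t).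
Proof.
  move=> uq ut sq dis. rewrite cat_uniq uq ut andbT /=.
  apply/hasPn => x xt; apply/negP => xq.
  have := disjointFr dis (sq x xq). by rewrite inE xt.
Qed.

End Aux.
Unset Implicit Arguments.

Theorem lemma7p1 (V : finType) (e : rel V) (e_sym : symmetric e)
  (e_irr : irreflexive e) (h l : nat) :
  (forall (h' : nat) (t : seq V) (W : {set V}),
     1 <= h' <= h + 1 ->
     size t = (h + 1) * l + h' - 1 ->
     is_path_power e h t ->
     [disjoint W & [pred x | x \in t]] ->
     (exists s : 'S_(l.+1), forall i : 'I_(l.+1),
        i.+1 <= #|common_nbrs e W (Qpath h h' l t (s i).+1)|) ->
     exists q : seq V,
       [/\ size q = l.+1, uniq q, {subset q <= W} &
           is_path_power e (h + 1) (insert_vertices h q t)])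
  /\
  (forall (t : seq V) (W : {set V}),
     size t = (h + 1) * l ->
     is_cycle_power e h t ->
     [disjoint W & [pred x | x \in t]] ->
     (exists s : 'S_l, forall i : 'I_l,
        i.+1 <= #|common_nbrs e W (Qcycle h l t (s i).+1)|) ->
     exists q : seq V,
       [/\ size q = l, uniq q, {subset q <= W} &
           is_cycle_power e (h + 1) (insert_vertices h q t)]).
Proof.
split.
- move=> h' t W Hh' Ht [Hu Hpt] Hdis [s Hs].
  have [x0 _] := card_gt0P (Hs ord0).
  have [q [Hq1 Hq2 Hq3]] := choose_perm
    (A := fun k => common_nbrs e W (Qpath h h' l t k.+1)) x0 Hs.
  have sq : {subset q <= W} by apply: (subW x0 Hq1 Hq3) => k; apply: AW.
  exists q; split => //.
  apply: core_path => //.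
  + rewrite Ht Hq1; nia.
  + exact: uqt sq Hdis.
  + move=> y0 a k Ha Hk Hr. rewrite Hq1 in Ha.
    have := Hq3 y0 a Ha. rewrite /common_nbrs inE => /andP[_ /allP Hall].
    rewrite e_sym; apply: Hall. rewrite /Qpath.
    case: ifP => [/eqP Ea|_]; [|case: ifP => [/eqP Ea|Ea]]; apply: mem_seg; nia.
- move=> t W Ht [Hu Hct] Hdis.
  case: l Ht => [|l] Ht [s Hs].
    by exists [::]; split => //; split => // x0 i j _.
  have [x0 _] := card_gt0P (Hs ord0).
  have [q [Hq1 Hq2 Hq3]] := choose_perm
    (A := fun k => common_nbrs e W (Qcycle h l.+1 t k.+1)) x0 Hs.
  have sq : {subset q <= W} by apply: (subW x0 Hq1 Hq3) => k; apply: AW.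
  exists q; split => //.
  apply: core_cycle => //.
  + by rewrite Ht Hq1.
  + exact: uqt sq Hdis.
  + move=> y0 a k Ha Hk Hr. rewrite Hq1 in Ha Hr.
    have := Hq3 y0 a Ha. rewrite /common_nbrs inE => /andP[_ /allP Hall].
    rewrite e_sym; apply: Hall. rewrite /Qcycle.
    case: ifP => [/eqP Ea|Ea].
    * rewrite mem_cat; apply/orP.
      case: (ltnP k (h + 1)) => Hkh; [right|left]; apply: mem_seg; nia.
    * apply: mem_seg; nia.
Qed.
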